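(* Let $p,q,r,s\ge 0$ be integers with $3+p+q=3+r+s=:n$, and let $H$ be a dephased complex Hadamard matrix of order $n$ of the block form \[H=\begin{bmatrix}1&1&1&1^p&1^q\\ 1&a&b&x&y\\ 1&b&a&x&-y\\ (1^r)^T&z^T&z^T&A&B\\ (1^s)^T&w^T&-w^T&C&D\end{bmatrix},\] where $a,b\in\mathbb{C}$ have modulus $1$, $x\in\mathbb{C}^p$, $y\in\mathbb{C}^q$, $z\in\mathbb{C}^r$, $w\in\mathbb{C}^s$ are row vectors, and $A,B,C,D$ are complex matrices of sizes $r\times p$, $r\times q$, $s\times p$, $s\times q$. For a complex number $\alpha$ of modulus $1$, let $H(\alpha)$ be the matrix obtained from $H$ by replacing $y$ by $\alpha y$ (so $-y$ becomes $-\alpha y$) and $w$ by $\overline{\alpha}w$ (so $-w$ becomes $-\overline{\alpha}w$). Then $H(\alpha)$ is a complex Hadamard matrix for every unimodular $\alpha$. If moreover $b=a$, then for all unimodular $\alpha,\gamma$ the matrix obtained from $H$ by replacing $y$ by $\alpha y$ and $w$ by $\gamma w$ is a complex Hadamard matrix.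
   Context: A complex Hadamard matrix of order $n$ is an $n\times n$ complex matrix with all entries of modulus $1$ satisfying $HH^\ast=nI_n$; it is dephased if its first row and first column consist of $1$'s. $1^k$ denotes the all-ones row vector of length $k$ and $^T$ denotes transpose. *)

(* Defs.v *)
(* complex numbers = arbitrary numClosedFieldType R. *)
From HB Require Import structures.
From mathcomp Require Import all_boot all_order all_algebra all_field.
Set Implicit Arguments. Unset Strict Implicit. Unset Printing Implicit Defensive.
Import Order.TTheory GRing.Theory Num.Theory.
Local Open Scope ring_scope.

Definition cHadamard (R : numClosedFieldType) (n : nat) (H : 'M[R]_n) : Prop :=
  (forall i j, `|H i j| = 1) /\ H *m (map_mx Num.conj H)^T = (n%:R)%:M.

(* The block matrix
   [ 1      1    1    1^p  1^q ]
   [ 1      a    b    x    y   ]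
   [ 1      b    a    x   -y   ]
   [ 1^r^T  z^T  z^T  A    B   ]
   [ 1^s^T  w^T -w^T  C    D   ]
   with row blocks of sizes 1,1,1,r,s and column blocks 1,1,1,p,q. *)
Definition Hblock (R : numClosedFieldType) (p q r s : nat) (a b : R) (x : 'rV[R]_p) (y : 'rV[R]_q)
  (z : 'rV[R]_r) (w : 'rV[R]_s) (A : 'M[R]_(r, p)) (B : 'M[R]_(r, q))
  (C : 'M[R]_(s, p)) (D : 'M[R]_(s, q))
  : 'M[R]_(1 + (1 + (1 + (r + s))), 1 + (1 + (1 + (p + q)))) :=
  col_mx (row_mx (const_mx 1) (row_mx (const_mx 1) (row_mx (const_mx 1)
            (row_mx (const_mx 1) (const_mx 1)))))
  (col_mx (row_mx (const_mx 1) (row_mx (const_mx a) (row_mx (const_mx b) (row_mx x y))))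
  (col_mx (row_mx (const_mx 1) (row_mx (const_mx b) (row_mx (const_mx a) (row_mx x (- y)))))
  (col_mx (row_mx (const_mx 1) (row_mx z^T (row_mx z^T (row_mx A B))))
          (row_mx (const_mx 1) (row_mx w^T (row_mx (- w^T) (row_mx C D))))))).

Lemma Hdim (p q r s : nat) (hrs : (3 + r + s = 3 + p + q)%N) :
  (1 + (1 + (1 + (r + s))) = 1 + (1 + (1 + (p + q))))%N.
Proof. by rewrite !addnA. Qed.

Definition Hmat (R : numClosedFieldType) (p q r s : nat) (hrs : (3 + r + s = 3 + p + q)%N) (a b : R)
  (x : 'rV[R]_p) (y : 'rV[R]_q) (z : 'rV[R]_r) (w : 'rV[R]_s)
  (A : 'M[R]_(r, p)) (B : 'M[R]_(r, q)) (C : 'M[R]_(s, p)) (D : 'M[R]_(s, q))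
  : 'M[R]_(1 + (1 + (1 + (p + q)))) :=
  castmx (Hdim hrs, erefl) (Hblock a b x y z w A B C D).

(* Main.v *)
Require Import Defs.
From Stdlib Require Import Setoid.
From HB Require Import structures.
From mathcomp Require Import all_boot all_order all_algebra all_field.
From mathcomp Require Import ring.
Import Order.TTheory GRing.Theory Num.Theory.
Local Open Scope ring_scope.

HB.lock Definition gr (R : numClosedFieldType) m n k (u : 'M[R]_(m,k)) (v : 'M[R]_(n,k)) : 'M[R]_(m,n) :=
  u *m (map_mx Num.conj v)^T.
Arguments gr {R m n k}.

Lemma gr_row (R : numClosedFieldType) m n k1 k2 (u1 : 'M[R]_(m,k1)) (u2 : 'M[R]_(m,k2))
  (v1 : 'M[R]_(n,k1)) (v2 : 'M[R]_(n,k2)) :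
  gr (row_mx u1 u2) (row_mx v1 v2) = gr u1 v1 + gr u2 v2.
Proof. by rewrite gr.unlock map_row_mx tr_row_mx mul_row_col. Qed.

Lemma gr_coll (R : numClosedFieldType) m1 m2 n k (u1 : 'M[R]_(m1,k)) (u2 : 'M[R]_(m2,k))
  (v : 'M[R]_(n,k)) : gr (col_mx u1 u2) v = col_mx (gr u1 v) (gr u2 v).
Proof. by rewrite gr.unlock mul_col_mx. Qed.

Lemma gr_colr (R : numClosedFieldType) m n1 n2 k (u : 'M[R]_(m,k)) (v1 : 'M[R]_(n1,k))
  (v2 : 'M[R]_(n2,k)) : gr u (col_mx v1 v2) = row_mx (gr u v1) (gr u v2).
Proof. by rewrite gr.unlock map_col_mx tr_col_mx mul_mx_row. Qed.

Lemma grZl (R : numClosedFieldType) m n k (c : R) (u : 'M[R]_(m,k)) (v : 'M[R]_(n,k)) :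
  gr (c *: u) v = c *: gr u v.
Proof. by rewrite gr.unlock scalemxAl. Qed.

Lemma grZr (R : numClosedFieldType) m n k (c : R) (u : 'M[R]_(m,k)) (v : 'M[R]_(n,k)) :
  gr u (c *: v) = c^* *: gr u v.
Proof. by rewrite gr.unlock map_mxZ linearZ /= scalemxAr. Qed.

Lemma grNl (R : numClosedFieldType) m n k (u : 'M[R]_(m,k)) (v : 'M[R]_(n,k)) :
  gr (- u) v = - gr u v.
Proof. by rewrite gr.unlock mulNmx. Qed.

Lemma grNr (R : numClosedFieldType) m n k (u : 'M[R]_(m,k)) (v : 'M[R]_(n,k)) :
  gr u (- v) = - gr u v.
Proof. by rewrite gr.unlock map_mxN linearN /= mulmxN. Qed.

Lemma gram_colP (R : numClosedFieldType) m1 m2 k (c : R) (X : 'M[R]_(m1,k)) (Y : 'M[R]_(m2,k)) :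
  gr (col_mx X Y) (col_mx X Y) = c%:M <->
  gr X X = c%:M /\ gr X Y = 0 /\ gr Y X = 0 /\ gr Y Y = c%:M.
Proof.
rewrite gr_coll !gr_colr scalar_mx_block; split.
  by move/eq_block_mx => [-> -> -> ->].
by case=> -> [-> [-> ->]].
Qed.

Lemma zero_colrP (R : numClosedFieldType) m n1 n2 k (u : 'M[R]_(m,k)) (v1 : 'M[R]_(n1,k))
  (v2 : 'M[R]_(n2,k)) : gr u (col_mx v1 v2) = 0 <-> gr u v1 = 0 /\ gr u v2 = 0.
Proof. rewrite gr_colr -row_mx0; split; [by move/eq_row_mx | by case=> -> ->]. Qed.

Lemma zero_collP (R : numClosedFieldType) m1 m2 n k (u1 : 'M[R]_(m1,k)) (u2 : 'M[R]_(m2,k))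
  (v : 'M[R]_(n,k)) : gr (col_mx u1 u2) v = 0 <-> gr u1 v = 0 /\ gr u2 v = 0.
Proof. rewrite gr_coll -col_mx0; split; [by move/eq_col_mx | by case=> -> ->]. Qed.

Lemma lin3 (R : comRingType) (L1 K1 L2 K2 L3 K3 L K c1 c2 c3 : R) :
  L1 = K1 -> L2 = K2 -> L3 = K3 ->
  c1 * (L1 - K1) + c2 * (L2 - K2) + c3 * (L3 - K3) = L - K -> L = K.
Proof. move=> -> -> -> /eqP; rewrite !subrr !mulr0 !addr0 eq_sym subr_eq0. by move/eqP. Qed.

Lemma cast_gram (R : numClosedFieldType) m m' n (e : m = m') (M : 'M[R]_(m,n)) :
  castmx (e, erefl) M *m (map_mx Num.conj (castmx (e, erefl) M))^T =
  castmx (e, e) (gr M M).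
Proof. rewrite gr.unlock; case: m' / e. by rewrite !castmx_id. Qed.

Lemma cast_scal (R : numClosedFieldType) m m' (e : m = m') (c : R) :
  castmx (e, e) (c%:M : 'M_m) = c%:M.
Proof. case: m' / e. by rewrite castmx_id. Qed.

Lemma castK' (R : numClosedFieldType) m m' (e : m = m') (A B : 'M[R]_m) :
  castmx (e, e) A = castmx (e, e) B -> A = B.
Proof. case: m' / e. by rewrite !castmx_id. Qed.

Lemma gram5P (R : numClosedFieldType) r s k (c : R) (R0 R1 R2 : 'M[R]_(1,k)) (R3 : 'M[R]_(r,k)) (R4 : 'M[R]_(s,k)) :
  gr (col_mx R0 (col_mx R1 (col_mx R2 (col_mx R3 R4)))) (col_mx R0 (col_mx R1 (col_mx R2 (col_mx R3 R4)))) = c%:M <->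
  [/\ [/\ gr R0 R0 = c%:M, gr R0 R1 = 0, gr R0 R2 = 0, gr R0 R3 = 0 & gr R0 R4 = 0],
      [/\ gr R1 R0 = 0, gr R1 R1 = c%:M, gr R1 R2 = 0, gr R1 R3 = 0 & gr R1 R4 = 0],
      [/\ gr R2 R0 = 0, gr R2 R1 = 0, gr R2 R2 = c%:M, gr R2 R3 = 0 & gr R2 R4 = 0],
      [/\ gr R3 R0 = 0, gr R3 R1 = 0, gr R3 R2 = 0, gr R3 R3 = c%:M & gr R3 R4 = 0] &
      [/\ gr R4 R0 = 0, gr R4 R1 = 0, gr R4 R2 = 0, gr R4 R3 = 0 & gr R4 R4 = c%:M]].
Proof.
rewrite !gram_colP ?zero_colrP ?zero_collP ?zero_colrP ?zero_collP.

split=> H; repeat match goal with [H: _ /\ _ |- _] => destruct H | [H: and5 _ _ _ _ _ |- _] => destruct H end; repeat split; assumption.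
Qed.
Set Implicit Arguments. Unset Strict Implicit.

Lemma lin2 (R : idomainType) (L1 K1 L2 K2 L K d c1 c2 : R) : d != 0 ->
  L1 = K1 -> L2 = K2 -> c1 * (L1 - K1) + c2 * (L2 - K2) = d * (L - K) -> L = K.
Proof.
move=> d0 -> -> /esym /eqP; rewrite !subrr !mulr0 addr0 mulf_eq0 (negbTE d0) /=.
by rewrite subr_eq0 => /eqP.
Qed.

Lemma trZ (R : numClosedFieldType) n (c : R) (w : 'rV[R]_n) : (c *: w)^T = c *: w^T.
Proof. by rewrite linearZ. Qed.

Lemma two_neq0 (R : numClosedFieldType) : (2 : R) != 0.
Proof. by rewrite pnatr_eq0. Qed.

Lemma lin2' (R : idomainType) (L1 K1 L2 K2 L K d c1 c2 : R) : d != 0 ->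
  c1 * (L1 - K1) + c2 * (L2 - K2) = d * (L - K) -> L2 = K2 -> L1 = K1 -> L = K.
Proof. by move=> d0 E e2 e1; apply: (lin2 d0 e1 e2 E). Qed.

Lemma lin1' (R : idomainType) (L1 K1 L K : R) :
  L1 - K1 = L - K -> L1 = K1 -> L = K.
Proof. by move=> E e1; apply: (@lin2 _ _ _ _ _ _ _ 1 1 0 (oner_neq0 _) e1 e1); rewrite E; ring. Qed.

Ltac same h := apply/matrixP => i j; move/matrixP/(_ i j): h; rewrite !mxE;
  apply: lin1'; ring.
Ltac pair h h' t := apply/matrixP => i j; move/matrixP/(_ i j): h; move/matrixP/(_ i j): h';
  rewrite !mxE;
  apply: (@lin2' _ _ _ _ _ _ _ 2 (1 + t) (1 - t) (two_neq0 _)); ring.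

Lemma gram_main (R : numClosedFieldType) p q r s (c : R) (a b : R)
  (x : 'rV[R]_p) (y : 'rV[R]_q) (z : 'rV[R]_r) (w : 'rV[R]_s)
  (A : 'M[R]_(r, p)) (B : 'M[R]_(r, q)) (C : 'M[R]_(s, p)) (D : 'M[R]_(s, q)) (alpha beta : R) :
  alpha * alpha^* = 1 -> beta * beta^* = 1 -> (b = a \/ beta = alpha^*) ->
  gr (Hblock a b x y z w A B C D) (Hblock a b x y z w A B C D) = c%:M ->
  gr (Hblock a b x (alpha *: y) z (beta *: w) A B C D)
     (Hblock a b x (alpha *: y) z (beta *: w) A B C D) = c%:M.
Proof.
move=> ha hb hab.
have hb' : alpha^* * alpha = 1 by rewrite mulrC.
rewrite /Hblock !gram5P => [[[h00 h01 h02 h03 h04] [h10 h11 h12 h13 h14] [h20 h21 h22 h23 h24]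
  [h30 h31 h32 h33 h34] [h40 h41 h42 h43 h44]]].
case: hab => Eb; subst; rewrite ?conjCK in hb *;
rewrite ?trZ;
rewrite ?(gr_row, grZl, grZr, grNl, grNr, opprK, scalerA, scalerN, scaleNr) ?conjCK ?ha ?hb ?hb' ?scale1r
  in h00 h01 h02 h03 h04 h10 h11 h12 h13 h14 h20 h21 h22 h23 h24
  h30 h31 h32 h33 h34 h40 h41 h42 h43 h44 *;
(split; split;
[ same h00 | pair h01 h02 alpha^* | pair h02 h01 alpha^* | same h03 | same h04
| pair h10 h20 alpha | same h11 | same h12 | pair h13 h23 alpha | pair h14 h24 alpha
| pair h20 h10 alpha | same h21 | same h22 | pair h23 h13 alpha | pair h24 h14 alpha
| same h30 | pair h31 h32 alpha^* | pair h32 h31 alpha^* | same h33 | same h34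
| same h40 | pair h41 h42 alpha^* | pair h42 h41 alpha^* | same h43 | same h44 ]).
Qed.
Set Implicit Arguments. Unset Strict Implicit.

Definition norm1 (R : numClosedFieldType) m n (M : 'M[R]_(m,n)) := forall i j, `|M i j| = 1.

Lemma norm1_col (R : numClosedFieldType) m1 m2 n (A : 'M[R]_(m1,n)) (B : 'M[R]_(m2,n)) :
  norm1 (col_mx A B) <-> norm1 A /\ norm1 B.
Proof.
split.
  by move=> h; split=> i j; [rewrite -(col_mxEu A B) | rewrite -(col_mxEd A B)]; apply: h.
case=> hA hB i j; case: (split_ordP i) => k ->; by rewrite ?col_mxEu ?col_mxEd.
Qed.

Lemma norm1_row (R : numClosedFieldType) m n1 n2 (A : 'M[R]_(m,n1)) (B : 'M[R]_(m,n2)) :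
  norm1 (row_mx A B) <-> norm1 A /\ norm1 B.
Proof.
split.
  by move=> h; split=> i j; [rewrite -(row_mxEl A B) | rewrite -(row_mxEr A B)]; apply: h.
case=> hA hB i j; case: (split_ordP j) => k ->; by rewrite ?row_mxEl ?row_mxEr.
Qed.

Lemma norm1Z (R : numClosedFieldType) m n (c : R) (A : 'M[R]_(m,n)) :
  `|c| = 1 -> (norm1 (c *: A) <-> norm1 A).
Proof.
move=> hc; split=> h i j; move: (h i j); rewrite ?mxE ?normrM hc ?mul1r //.
Qed.

Lemma norm1N (R : numClosedFieldType) m n (A : 'M[R]_(m,n)) :
  norm1 (- A) <-> norm1 A.
Proof. by split=> h i j; move: (h i j); rewrite ?mxE ?normrN. Qed.

Lemma norm1_cast (R : numClosedFieldType) m m' n (e : m = m') (M : 'M[R]_(m,n)) :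
  norm1 (castmx (e, erefl n) M) <-> norm1 M.
Proof. case: m' / e. by rewrite castmx_id. Qed.

Lemma norm_main (R : numClosedFieldType) p q r s (a b : R)
  (x : 'rV[R]_p) (y : 'rV[R]_q) (z : 'rV[R]_r) (w : 'rV[R]_s)
  (A : 'M[R]_(r, p)) (B : 'M[R]_(r, q)) (C : 'M[R]_(s, p)) (D : 'M[R]_(s, q)) (alpha beta : R) :
  `|alpha| = 1 -> `|beta| = 1 ->
  norm1 (Hblock a b x y z w A B C D) ->
  norm1 (Hblock a b x (alpha *: y) z (beta *: w) A B C D).
Proof.
move=> ha hb; rewrite /Hblock trZ !norm1_col !norm1_row !norm1N (norm1Z _ ha) (norm1Z _ hb).
by [].
Qed.

Unset Implicit Arguments.

Theorem theorem1 (R : numClosedFieldType) (p q r s : nat) (hrs : (3 + r + s = 3 + p + q)%N) (a b : R)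
  (x : 'rV[R]_p) (y : 'rV[R]_q) (z : 'rV[R]_r) (w : 'rV[R]_s)
  (A : 'M[R]_(r, p)) (B : 'M[R]_(r, q)) (C : 'M[R]_(s, p)) (D : 'M[R]_(s, q)) :
  `|a| = 1 -> `|b| = 1 ->
  cHadamard (Hmat hrs a b x y z w A B C D) ->
  (forall alpha : R, `|alpha| = 1 ->
     cHadamard (Hmat hrs a b x (alpha *: y) z (alpha^* *: w) A B C D)) /\
  (b = a -> forall alpha gamma : R, `|alpha| = 1 -> `|gamma| = 1 ->
     cHadamard (Hmat hrs a b x (alpha *: y) z (gamma *: w) A B C D)).
Proof.
move=> _ _ [Hn Hg].
have key : forall al be : R, `|al| = 1 -> `|be| = 1 -> (b = a \/ be = al^*) ->
    cHadamard (Hmat hrs a b x (al *: y) z (be *: w) A B C D).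
  move=> al be hal hbe hab; split.
    have : norm1 (Hmat hrs a b x y z w A B C D) by [].
    rewrite /Hmat !norm1_cast => Hn'.
    have : norm1 (Hmat hrs a b x (al *: y) z (be *: w) A B C D); last by [].
    by rewrite /Hmat norm1_cast; apply: norm_main.
  move: Hg; rewrite /Hmat !cast_gram => Hg.
  have Hg' : gr (Hblock a b x y z w A B C D) (Hblock a b x y z w A B C D) =
             (3 + p + q)%N%:R%:M.
    by apply: (@castK' _ _ _ (Hdim hrs)); rewrite Hg cast_scal.
  rewrite (gram_main _ _ hab Hg') ?cast_scal //.
    by rewrite -normCK hal expr1n.
  by rewrite -normCK hbe expr1n.
split.
  move=> al hal; apply: key => //; last by right.
  by rewrite norm_conjC.
by move=> eba al ga hal hga; apply: key => //; left.
Qed.
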